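(* Let $\mathbf L=(L_1,\ldots,L_K)$ and $\mathbf L'=(L'_1,\ldots,L'_{K'})$ be weakly decreasing sequences of positive integers with $\mathbf L\preccurlyeq\mathbf L'$. If $\mathbf L'\in\mathrm{TFF}(\alpha,N)$, then $\mathbf L\in\mathrm{TFF}(\alpha,N)$.
   Context: Fix a positive integer $N$. A weakly decreasing sequence of positive integers $(L_1,\ldots,L_K)$ belongs to $\mathrm{TFF}(\alpha,N)$ if there exist orthogonal projections $P_1,\ldots,P_K$ on $\mathbb{R}^N$ with $\operatorname{rank}P_i=L_i$ and $\sum_{i=1}^K P_i=\alpha\mathbf I$ (then necessarily $\alpha=\sum L_i/N$). For weakly decreasing sequences of nonnegative integers, $\mathbf L\preccurlyeq\mathbf L'$ (majorization) means $\sum_{i=1}^K L_i=\sum_{i=1}^{K'}L'_i$ and $\sum_{i=1}^k L_i\le\sum_{i=1}^k L'_i$ for all $k\le\min(K,K')$. *)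

(* Defs.v *)
From HB Require Import structures.
From mathcomp Require Import all_boot all_order all_algebra.
From mathcomp Require Import reals.
Set Implicit Arguments. Unset Strict Implicit. Unset Printing Implicit Defensive.
Import Order.TTheory GRing.Theory Num.Theory.
Local Open Scope ring_scope.

Definition orth_proj (R : realType) (N : nat) (P : 'M[R]_N) : Prop :=
  P^T = P /\ P *m P = P.

Definition wdec_pos (L : seq nat) : Prop :=
  sorted geq L /\ all (fun l => 0 < l)%N L.

Definition TFF (R : realType) (alpha : R) (N : nat) (L : seq nat) : Prop :=
  wdec_pos L /\
  exists P : 'I_(size L) -> 'M[R]_N,
    (forall i, orth_proj (P i) /\ \rank (P i) = nth 0%N L i) /\
    \sum_(i < size L) P i = alpha%:M.

Definition majorized (L L' : seq nat) : Prop :=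
  sumn L = sumn L' /\
  forall k, (k <= minn (size L) (size L'))%N ->
    (sumn (take k L) <= sumn (take k L'))%N.

(* Main.v *)
Require Import Defs.
From HB Require Import structures.
From mathcomp Require Import all_boot all_order all_algebra.
From mathcomp Require Import reals.
From mathcomp Require Import zify.
Set Implicit Arguments. Unset Strict Implicit. Unset Printing Implicit Defensive.
Import Order.TTheory GRing.Theory Num.Theory.

Section LA.
Local Open Scope ring_scope.
Variables (R : realType) (N : nat).
Implicit Types A B P Q : 'M[R]_N.

Lemma idem_rank_add A B : A *m A = A -> B *m B = B -> A *m B = 0 -> B *m A = 0 ->
  \rank (A + B)%R = (\rank A + \rank B)%N.
Proof.
move=> AA BB AB BA.
have cap0 : \rank (A :&: B)%MS = 0%N.
  set X := (A :&: B)%MS.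
  have XA : X *m A = X.
    have /submxP [D ->] : (X <= A)%MS by apply: capmxSl.
    by rewrite -mulmxA AA.
  have XB : X *m B = X.
    have /submxP [D ->] : (X <= B)%MS by apply: capmxSr.
    by rewrite -mulmxA BB.
  by rewrite -XB -XA -mulmxA AB mulmx0 mxrank0.
have := mxrank_sum_cap A B; rewrite cap0 addn0 => <-.
have h1 : ((A + B)%R <= (A + B)%MS)%MS.
  exact: addmx_sub_adds (submx_refl A) (submx_refl B).
have h2 : ((A + B)%MS <= (A + B)%R)%MS.
  rewrite addsmx_sub; apply/andP; split.
    have eA : A *m (A + B) = A by rewrite mulmxDr AA AB addr0.
    by rewrite -{1}eA; exact: submxMl.
  have eB : B *m (A + B) = B by rewrite mulmxDr BB BA add0r.
  by rewrite -{1}eB; exact: submxMl.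
by apply/eqP; rewrite eqn_leq; apply/andP; split; apply: mxrankS.
Qed.

Lemma exists_vec P Q : P *m P = P -> (\rank Q < \rank P)%N ->
  exists v : 'rV[R]_N, [/\ v != 0, v *m P = v & v *m Q = 0].
Proof.
move=> PP lt.
have := mxrank_mul_ker P Q.
have := mxrankM_maxr P Q.
set X := (P :&: kermx Q)%MS => h1 h2.
have Xn0 : X != 0.
  apply/eqP => X0; move: h2; rewrite X0 mxrank0 addn0 => h2.
  by move: (leq_trans h1 (leqnn _)); rewrite h2 leqNgt lt.
have [i Hi] : exists i, row i X != 0.
  case: (pickP (fun i => row i X != 0)) => [i Hi|H]; first by exists i.
  move/eqP: Xn0; case; apply/row_matrixP => i; rewrite row0.
  by move/negbFE/eqP: (H i).
exists (row i X); split => //.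
  have /submxP [D ->] : (row i X <= P)%MS.
    by apply: submx_trans (row_sub i X) (capmxSl _ _).
  by rewrite -mulmxA PP.
apply/sub_kermxP.
by apply: submx_trans (row_sub i X) (capmxSr _ _).
Qed.

Lemma transfer P Q : orth_proj P -> orth_proj Q -> (\rank Q < \rank P)%N ->
  exists P' Q', [/\ orth_proj P', orth_proj Q', \rank P' = (\rank P).-1,
    \rank Q' = (\rank Q).+1 & P' + Q' = P + Q].
Proof.
move=> [PT PP] [QT QQ] lt.
have [v [vn0 vP vQ]] := exists_vec PP lt.
have Pv : P *m v^T = v^T by rewrite -{1}PT -trmx_mul vP.
have Qv : Q *m v^T = 0 by rewrite -{1}QT -trmx_mul vQ trmx0.
set c := (v *m v^T) 0 0.
have vv : v *m v^T = c%:M by apply: mx11_scalar.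
have cn0 : c != 0.
  apply/eqP => c0; move/eqP: vn0; apply; apply/matrixP => i j.
  rewrite ord1 mxE.
  have : \sum_k v 0 k * v 0 k = 0.
    have -> : \sum_k v 0 k * v 0 k = c by rewrite /c mxE; apply: eq_bigr => k _; rewrite mxE.
    exact: c0.
  move/psumr_eq0P => H.
  have /eqP := H (fun k _ => (ltac:(by rewrite -expr2 sqr_ge0))) j isT.
  by rewrite mulf_eq0 orbb => /eqP.
set E := c^-1 *: (v^T *m v).
have ET : E^T = E by rewrite /E linearZ /= trmx_mul trmxK.
have EE : E *m E = E.
  rewrite /E -scalemxAl -scalemxAr scalerA mulmxA -(mulmxA v^T) vv.
  rewrite mul_mx_scalar -scalemxAl scalerA -mulrA mulVf // mulr1.
  by [].
have PE : P *m E = E by rewrite /E -scalemxAr mulmxA Pv.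
have EP : E *m P = E by rewrite /E -scalemxAl -mulmxA vP.
have QE : Q *m E = 0 by rewrite /E -scalemxAr mulmxA Qv mul0mx scaler0.
have EQ : E *m Q = 0 by rewrite /E -scalemxAl -mulmxA vQ mulmx0 scaler0.
have rE : \rank E = 1%N.
  apply/eqP; rewrite eqn_leq; apply/andP; split.
    rewrite /E scalemxAl.
    exact: leq_trans (mxrankM_maxr _ _) (rank_leq_row v).
  rewrite lt0n mxrank_eq0; apply/eqP => E0.
  have : E *m v^T = v^T.
    by rewrite /E -scalemxAl -mulmxA vv mul_mx_scalar scalerA mulVf // scale1r.
  rewrite E0 mul0mx => /esym /eqP; rewrite trmx_eq0 => /eqP v0.
  by rewrite v0 eqxx in vn0.
set P' := P - E.
have P'P' : P' *m P' = P'.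
  by rewrite /P' mulmxBl !mulmxBr PP PE EP EE subrr subr0.
have P'E : P' *m E = 0 by rewrite /P' mulmxBl PE EE subrr.
have EP' : E *m P' = 0 by rewrite /P' mulmxBr EP EE subrr.
have rP := idem_rank_add P'P' EE P'E EP'.
have rQ := idem_rank_add QQ EE QE EQ.
exists P', (Q + E); split.
- by split => //; rewrite /P' linearB /= PT ET.
- split; first by rewrite linearD /= QT ET.
  by rewrite mulmxDl !mulmxDr QQ QE EQ EE addr0 add0r.
- by have := rP; rewrite /P' subrK rE addn1 => ->.
- by rewrite rQ rE addn1.
- by rewrite /P' (addrC Q) addrA subrK.
Qed.
End LA.

Definition Ssum (f : nat -> nat) k := (\sum_(m < k) f m)%N.

Lemma Ssum0 f : Ssum f 0 = 0.
Proof. by rewrite /Ssum big_ord0. Qed.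

Lemma Ssum_rec f k : Ssum f k.+1 = Ssum f k + f k.
Proof. by rewrite /Ssum big_ord_recr. Qed.

Lemma cross2 (p : nat -> bool) a b : p a -> ~~ p b -> a < b ->
  exists c, [/\ a <= c < b, (forall m, a <= m <= c -> p m) & ~~ p c.+1].
Proof.
move=> pa npb ab; move: {2}(b - a) (leqnn (b - a)) => d.
elim: d a pa ab => [|d IH] a pa ab hd; first by lia.
case pa1 : (p a.+1).
- have ab1 : a.+1 < b.
    rewrite ltn_neqAle ab andbT; apply/eqP => e; by rewrite -e pa1 in npb.
  have [|c [h1 h2 h3]] := IH a.+1 pa1 ab1; first by lia.
  exists c; split => //; first by lia.
  move=> m hm; have [->//|ne] := eqVneq m a; apply: h2; lia.
- exists a; split => //; first by rewrite leqnn.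
  + move=> m hm; have -> : m = a by lia. by [].
  + by rewrite pa1.
Qed.

Definition upd (f : nat -> nat) i j :=
  fun m => if m == i then (f i).-1 else if m == j then (f j).+1 else f m.

Lemma Ssum_upd f i j k : i < j -> 0 < f i ->
  Ssum f k = Ssum (upd f i j) k + (if (i < k) && (k <= j) then 1 else 0).
Proof.
move=> ij fi; elim: k => [|k IH]; first by rewrite !Ssum0.
rewrite !Ssum_rec IH /upd.
case: (eqVneq k i) => [->|ki].
  by rewrite ltnn /= ltnSn /= ij; lia.
case: (eqVneq k j) => [->|kj].
  rewrite ij leqnn /= ltnS (ltnW ij) /= ltnNge leqnn /=; lia.
have -> : (i < k.+1 <= j) = (i < k <= j).
  move/eqP: ki => ki; move/eqP: kj => kj.
  apply/idP/idP => /andP [h1 h2]; apply/andP; split; lia.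
by rewrite addnAC.
Qed.

Lemma sum_lt n (F G : 'I_n -> nat) k0 : (forall k, F k <= G k) -> F k0 < G k0 ->
  \sum_k F k < \sum_k G k.
Proof.
move=> H H0; rewrite (bigD1 k0) //= [X in _ < X](bigD1 k0) //=.
rewrite -addSn; apply: leq_add H0 _; apply: leq_sum => k _; exact: H.
Qed.

Section Core.
Local Open Scope ring_scope.
Variables (R : realType) (N : nat) (alpha : R).

Definition Good n (f : nat -> nat) := exists P : 'I_n -> 'M[R]_N,
  (forall i : 'I_n, orth_proj (P i) /\ \rank (P i) = f i) /\
  \sum_(i < n) P i = alpha%:M.

Lemma eq_case n (f g : nat -> nat) :
  (forall k, (k <= n)%N -> Ssum g k = Ssum f k) -> Good n f -> Good n g.
Proof.
move=> H [P [HP HS]]; exists P; split => // i; have [h1 h2] := HP i.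
split => //; rewrite h2.
have := H i (ltnW (ltn_ord i)); have := H i.+1 (ltn_ord i).
rewrite !Ssum_rec; lia.
Qed.

Definition Phi n (f g : nat -> nat) := (\sum_(k < n.+1) (Ssum f k - Ssum g k))%N.

Lemma step n (f g : nat -> nat) k0 :
  (forall a b, (a <= b < n)%N -> (g b <= g a)%N) ->
  (forall k, (k <= n)%N -> (Ssum g k <= Ssum f k)%N) -> Ssum g n = Ssum f n ->
  (k0 <= n)%N -> (Ssum g k0 < Ssum f k0)%N -> Good n f ->
  exists f', [/\ Good n f', (forall k, (k <= n)%N -> (Ssum g k <= Ssum f' k)%N),
     Ssum g n = Ssum f' n & (Phi n f' g < Phi n f g)%N].
Proof.
move=> gdec hle heq k0n k0lt Gf.
have k00 : (0 < k0)%N by move: k0lt; case: k0 {k0n} => //; rewrite !Ssum0.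
have [i [/andP [_ ik0] hi1 hi2]] :=
  @cross2 (fun k => ~~ (Ssum g k < Ssum f k)%N) 0 k0 ltac:(by rewrite /= !Ssum0) ltac:(by rewrite /= negbK) k00.
rewrite negbK in hi2.
have hi3 := hi1 i (leqnn _); rewrite /= in hi3.
have i1n : (i.+1 < n)%N.
  rewrite ltn_neqAle; apply/andP; split; last by lia.
  by apply/eqP => e; move: hi2; rewrite e heq ltnn.
have [j [/andP [ij jn] hj1 hj2]] :=
  @cross2 (fun k => (Ssum g k < Ssum f k)%N) i.+1 n hi2 ltac:(by rewrite /= heq ltnn) i1n.
have hj3 := hj1 j ltac:(by rewrite /= ij leqnn).
rewrite /= in hj2 hj3.
have := hle i ltac:(lia); have := hle i.+1 ltac:(lia).
have := hle j ltac:(lia); have := hle j.+1 ltac:(lia).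
have := gdec i j ltac:(lia).
rewrite !Ssum_rec => g1 h1 h2 h3 h4.
rewrite !Ssum_rec in hi2 hj2; rewrite /= in hi3.
move/negP/negP: hi3; rewrite -leqNgt => hi3.
move/negP/negP: hj2; rewrite -leqNgt => hj2.
have fij : (f j < f i)%N by lia.
have fi0 : (0 < f i)%N by lia.
have ij' : (i < j)%N by lia.
pose f' := upd f i j.
have Sf' := fun k => @Ssum_upd f i j k ij' fi0.
exists f'; split.
- case: Gf => P [HP HS].
  have Hi : (i < n)%N by lia.
  have Hj : (j < n)%N by lia.
  pose oi := Ordinal Hi; pose oj := Ordinal Hj.
  have [[Pi ri] [Pj rj]] := (HP oi, HP oj).
  have [P' [Q' [oP oQ rP rQ ePQ]]] := transfer Pi Pj ltac:(by rewrite /= ri rj).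
  pose P2 := fun k : 'I_n => if val k == i then P' else if val k == j then Q' else P k.
  exists P2; split.
  + move=> k; rewrite /P2 /f' /upd.
    case: (eqVneq (val k) i) => [e|ne]; first by rewrite rP ri.
    case: (eqVneq (val k) j) => [e|ne']; first by rewrite rQ rj.
    exact: HP.
  + have oij : oj != oi by apply/eqP => /(congr1 val) /= e; lia.
    rewrite -HS (bigD1 oi) //= (bigD1 oj) //= [in RHS](bigD1 oi) //= [in RHS](bigD1 oj) //=.
    rewrite /P2 /= eqxx (negbTE (_ : j != i)); last by apply/eqP; lia.
    rewrite eqxx !addrA ePQ; congr (_ + _).
    apply: eq_bigr => k /andP [k1 k2].
    have -> : (val k == i) = false by apply/negbTE; apply: contra k1 => /eqP e; apply/eqP/val_inj.
    by have -> : (val k == j) = false by apply/negbTE; apply: contra k2 => /eqP e; apply/eqP/val_inj.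
- move=> k kn; rewrite /f'; have := Sf' k; have := hle k kn; case: ifP => h; last by lia.
  have := hj1 k ltac:(lia); rewrite /=; lia.
- rewrite /f'; by have := Sf' n; rewrite (_ : (i < n <= j)%N = false); [lia | apply/negbTE; lia].
- have Hi1 : (i.+1 < n.+1)%N by lia.
  rewrite /Phi; apply: (@sum_lt _ _ _ (Ordinal Hi1)) => [k|]; rewrite /f'; first by have := Sf' k; have := hle k (ltn_ord k); case: ifP; lia.
  by have := Sf' i.+1; rewrite /= ltnSn ij /= !Ssum_rec; lia.
Qed.

Lemma core n (f g : nat -> nat) :
  (forall a b, (a <= b < n)%N -> (g b <= g a)%N) ->
  (forall k, (k <= n)%N -> (Ssum g k <= Ssum f k)%N) -> Ssum g n = Ssum f n ->
  Good n f -> Good n g.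
Proof.
move=> gdec.
suff H : forall m f, (Phi n f g <= m)%N ->
    (forall k, (k <= n)%N -> (Ssum g k <= Ssum f k)%N) -> Ssum g n = Ssum f n ->
    Good n f -> Good n g.
  by move=> hle heq Gf; exact: H _ f (leqnn _) hle heq Gf.
elim=> [|m IH] f' hP hle heq Gf;
  case: (boolP [exists k : 'I_n.+1, (Ssum g k < Ssum f' k)%N]) => [/existsP [k hk]| /existsPn hn].
- have [f2 [_ _ _ hlt]] := step gdec hle heq (ltn_ord k) hk Gf.
  by move: hlt hP; lia.
- apply: (eq_case _ Gf) => k kn; apply/eqP; rewrite eqn_leq hle //=.
  by have := hn (Ordinal (kn : (k < n.+1)%N)); rewrite /= -leqNgt.
- have [f2 [G2 hle2 heq2 hlt]] := step gdec hle heq (ltn_ord k) hk Gf.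
  apply: (IH f2) => //; lia.
- apply: (eq_case _ Gf) => k kn; apply/eqP; rewrite eqn_leq hle //=.
  by have := hn (Ordinal (kn : (k < n.+1)%N)); rewrite /= -leqNgt.
Qed.
End Core.

Lemma Ssum_nth (s : seq nat) k : Ssum (nth 0 s) k = sumn (take k s).
Proof.
elim: s k => [|x s IH] [|k] //=; rewrite ?Ssum0 //.
- rewrite /Ssum big1 // => i _; by rewrite nth_nil.
- by rewrite /Ssum big_ord_recl /= -IH.
Qed.

Lemma sumn_take_le (s : seq nat) k : (sumn (take k s) <= sumn s)%N.
Proof. by rewrite -{2}(cat_take_drop k s) sumn_cat leq_addr. Qed.

Unset Implicit Arguments.
Local Open Scope ring_scope.

Theorem theorem2p3 (R : realType) (N : nat) (alpha : R) (L L' : seq nat) :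
  (0 < N)%N ->
  wdec_pos L -> wdec_pos L' ->
  majorized L L' ->
  TFF alpha N L' -> TFF alpha N L.
Proof.
move=> _ wL [sL' pL'] [hsum hpre] [_ [P [HP HS]]].
have [sL pL] := wL.
have size_le : (size L' <= size L)%N.
  rewrite leqNgt; apply/negP => lt.
  have := hpre (size L); rewrite leq_min leqnn (ltnW lt) => /(_ isT).
  rewrite take_oversize // hsum -{1}(cat_take_drop (size L) L') sumn_cat.
  rewrite (drop_nth 0 lt) /=.
  have := (all_nthP 0 pL') (size L) lt; rewrite /=; lia.
pose n := size L.
pose F := fun k : nat => match @insub _ (fun k => (k < size L')%N) 'I_(size L') k with
  Some i => P i | None => 0 end.
have Gf : @Good R N alpha n (nth 0 L').
  exists (fun k : 'I_n => F k); split.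
    move=> k; rewrite /F; case: insubP => [u _ eu|].
      by have [h1 h2] := HP u; rewrite h2 eu.
    rewrite -leqNgt => hk; rewrite nth_default //; split; last exact: mxrank0.
    by split; rewrite ?trmx0 ?mul0mx.
  rewrite -HS.
  have -> : \sum_(i < size L') P i = \sum_(i < size L') F i.
    by apply: eq_bigr => i _; rewrite /F valK.
  rewrite (big_ord_widen _ F size_le).
  rewrite [RHS]big_mkcond /=; apply: eq_bigr => k _.
  case: ifP => // hk; rewrite /F insubN //; by rewrite hk.
have gdec : forall a b, (a <= b < n)%N -> (nth 0 L b <= nth 0 L a)%N.
  move=> a b /andP [ab bn].
  have tr : transitive geq by move=> x y z h1 h2; exact: leq_trans h2 h1.
  have rf : reflexive geq by move=> x; exact: leqnn.
  apply: (sorted_leq_nth tr rf 0 sL) => //; rewrite inE /=; lia.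
have hle : forall k, (k <= n)%N -> (Ssum (nth 0 L) k <= Ssum (nth 0 L') k)%N.
  move=> k kn; rewrite !Ssum_nth.
  case: (leqP k (size L')) => hk.
    by apply: hpre; rewrite leq_min kn hk.
  rewrite (take_oversize (ltnW hk)) -hsum; exact: sumn_take_le.
have heq : Ssum (nth 0 L) n = Ssum (nth 0 L') n.
  by rewrite !Ssum_nth !take_oversize.
have [Q [HQ HQS]] := core gdec hle heq Gf.
by split => //; exists Q.
Qed.
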